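(* Let $F$ be a graph. (i) If every edge of $F$ lies in a cycle of $F$ of length at most $m+1$, then $\mathrm{rsat}(n,F)=\Omega(n^{1+1/m})$. (ii) If for every edge $e$ of $F$ the graph $F\setminus e$ has diameter at most $r$, then $\mathrm{rsat}(n,F)=\Omega(n^{1+1/r})$. (iii) If $F$ is connected, then there exists a constant $c=c_F$ such that $\liminf_{n\to\infty}\mathrm{rsat}(n,F)/n\le c$ if and only if $F$ contains a cut edge.
   Context: All graphs are finite and simple. For a graph $F$, a graph $G$ is $F$-saturated if $G$ contains no copy of $F$, but adding any edge between two non-adjacent vertices of $G$ creates a copy of $F$. A graph is regular if all vertices have the same degree. $\mathrm{rsat}(n,F)$ denotes the smallest number of edges of a regular $n$-vertex $F$-saturated graph, defined only for those $n$ for which such a graph exists; the asymptotic statements ($\Omega$, $\liminf$) are over those $n$ for which $\mathrm{rsat}(n,F)$ is defined. For an edge $e$ of $F$, $F\setminus e$ is the graph on the vertex set of $F$ with edge set $E(F)\setminus\{e\}$. A cut edge is an edge whose removal increases the number of connected components. *)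

(* Defs.v *)
From Stdlib Require Import Reals.
From mathcomp Require Import all_boot.

Set Implicit Arguments.
Unset Strict Implicit.
Unset Printing Implicit Defensive.

(* A (simple) graph on a finite vertex type T is given by its edge set,
   a set of 2-element subsets of T. *)
Definition is_sgraph (T : finType) (E : {set {set T}}) : Prop :=
  forall e, e \in E -> #|e| = 2.

Definition adj (T : finType) (E : {set {set T}}) : rel T :=
  fun x y => (x != y) && ([set x; y] \in E).

Definition deg (T : finType) (E : {set {set T}}) (x : T) : nat :=
  #|[set y | adj E x y]|.

Definition regular (T : finType) (E : {set {set T}}) : Prop :=
  forall x y : T, deg E x = deg E y.

Definition has_copy (V W : finType) (F : {set {set V}}) (G : {set {set W}}) : Prop :=
  exists f : V -> W, injective f /\ forall x y, adj F x y -> adj G (f x) (f y).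

Definition saturated (V W : finType) (F : {set {set V}}) (G : {set {set W}}) : Prop :=
  [/\ is_sgraph G, ~ has_copy F G &
      forall x y : W, x != y -> ~~ adj G x y ->
        has_copy F (G :|: [set [set x; y]])].

Definition is_rsat (V : finType) (F : {set {set V}}) (n k : nat) : Prop :=
  (exists G : {set {set 'I_n}}, [/\ regular G, saturated F G & #|G| = k]) /\
  (forall G : {set {set 'I_n}}, regular G -> saturated F G -> k <= #|G|).

(* rsat(n,F) = Omega(g n), over those n for which rsat(n,F) is defined. *)
Definition rsat_Omega (V : finType) (F : {set {set V}}) (g : nat -> R) : Prop :=
  exists c : R, Rlt 0 c /\ exists N : nat,
    forall n k, N <= n -> is_rsat F n k -> Rle (Rmult c (g n)) (INR k).

(* liminf_{n -> oo} rsat(n,F)/n <= c, over those n for which rsat is defined. *)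
Definition rsat_liminf_le (V : finType) (F : {set {set V}}) (c : R) : Prop :=
  forall eps : R, Rlt 0 eps -> forall N : nat,
    exists n k, [/\ N <= n, is_rsat F n k & Rlt (Rdiv (INR k) (INR n)) (Rplus c eps)].

Definition edge_in_short_cycle (V : finType) (F : {set {set V}}) (e : {set V})
  (L : nat) : Prop :=
  exists c : seq V, [/\ uniq c, cycle (adj F) c, 3 <= size c, size c <= L &
                      exists2 x, x \in c & e = [set x; next c x]].

Definition dist_le (T : finType) (G : {set {set T}}) (x y : T) (r : nat) : Prop :=
  exists p : seq T, [/\ path (adj G) x p, last x p = y & size p <= r].

Definition diam_le (T : finType) (G : {set {set T}}) (r : nat) : Prop :=
  forall x y : T, dist_le G x y r.

Definition connected (T : finType) (G : {set {set T}}) : Prop :=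
  forall x y : T, connect (adj G) x y.

Definition ncomp (T : finType) (G : {set {set T}}) : nat :=
  n_comp (adj G) (predT : {pred T}).

Definition cut_edge (T : finType) (G : {set {set T}}) (e : {set T}) : Prop :=
  e \in G /\ ncomp G < ncomp (G :\ e).

(* Main.v *)
Require Import Defs.
From Stdlib Require Import Reals Classical.
From mathcomp Require Import all_boot.

Set Implicit Arguments.
Unset Strict Implicit.
Unset Printing Implicit Defensive.

Section Basics.
Variable T : finType.
Implicit Types G : {set {set T}}.

Lemma adjC G x y : adj G x y = adj G y x.
Proof. by rewrite /adj eq_sym setUC. Qed.

Lemma adj_neq G x y : adj G x y -> x != y.
Proof. by case/andP. Qed.

Lemma set2_eq (a b c d : T) : [set a; b] = [set c; d] ->
  (a = c /\ b = d) \/ (a = d /\ b = c).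
Proof.
move=> E.
have ha : a \in [set c; d] by rewrite -E !inE eqxx.
have hb : b \in [set c; d] by rewrite -E !inE eqxx orbT.
have hc : c \in [set a; b] by rewrite E !inE eqxx.
have hd : d \in [set a; b] by rewrite E !inE eqxx orbT.
move: ha hb hc hd; rewrite !inE.
by do 4! (case/orP => /eqP ?); subst; auto.
Qed.

Lemma card_pairs (P : pred T) (R : rel T) :
  #|[set p : T * T | P p.1 && R p.1 p.2]| = \sum_(x | P x) #|[set y | R x y]|.
Proof.
rewrite -sum1_card.
have -> : \sum_(x | P x) #|[set y | R x y]| = \sum_(x | P x) \sum_(y | R x y) 1.
  by apply: eq_bigr => x _; rewrite -sum1_card; apply: eq_bigl => y; rewrite inE.
rewrite pair_big_dep /=. apply: eq_bigl => p; by rewrite inE.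
Qed.
Lemma handshake G : #|[set p : T * T | adj G p.1 p.2]| <= 2 * #|G|.
Proof.
pose h (p : T * T) := ([set p.1; p.2], (enum_rank p.1 < enum_rank p.2)%N).
rewrite -(card_in_imset (f := h)); last first.
  move=> [a b] [c d]; rewrite !inE /= => /adj_neq ab /adj_neq cd [/set2_eq [[-> ->] | [E1 E2]] Eb] //.
  subst; move: Eb; case: (ltngtP (enum_rank c) (enum_rank d)) => //.
  by move/val_inj/enum_rank_inj => E; rewrite E eqxx in cd.
have -> : 2 * #|G| = #|setX G [set: bool]| by rewrite cardsX cardsT card_bool mulnC.
apply: subset_leq_card; apply/subsetP => q /imsetP [[a b]] H ->.
move: H; rewrite inE /= => /andP [_ Hab]. by rewrite !inE Hab.
Qed.

Lemma card_adj_pairs G : #|[set p : T * T | adj G p.1 p.2]| = \sum_x deg G x.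
Proof.
have -> : [set p : T * T | adj G p.1 p.2] = [set p : T * T | predT p.1 && adj G p.1 p.2] by [].
by rewrite card_pairs.
Qed.
Lemma path_rev G x p : path (adj G) x p ->
  exists q, [/\ path (adj G) (last x p) q, last (last x p) q = x & size q = size p].
Proof.
elim/last_ind: p => [|p z IH]; first by exists [::].
rewrite rcons_path => /andP [/IH [q [Pq Lq Sq]] Hz].
exists (last x p :: q); rewrite last_rcons /= Lq size_rcons Sq; split => //.
by rewrite adjC Hz.
Qed.

Lemma dist_sym G x y r : dist_le G x y r -> dist_le G y x r.
Proof.
move=> [p [Pp Lp Sp]]; have [q [Pq Lq Sq]] := path_rev Pp.
by exists q; rewrite -Lp Sq.
Qed.

Fixpoint ball G (x0 : T) i : {set T} :=
  if i is i'.+1 then ball G x0 i' :|: [set y | [exists z in ball G x0 i', adj G z y]]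
  else [set x0].

Lemma nbr_card G d (B : {set T}) : (forall x, deg G x = d) ->
  #|[set y | [exists z in B, adj G z y]]| <= #|B| * d.
Proof.
move=> Hd.
apply: (@leq_trans #|[set p : T * T | (p.1 \in B) && adj G p.1 p.2]|).
  apply: (leq_trans _ (leq_imset_card snd _)).
  apply: subset_leq_card; apply/subsetP => y; rewrite inE => /existsP [z /andP [zB Hzy]].
  by apply/imsetP; exists (z, y); rewrite // inE /= zB Hzy.
rewrite card_pairs.
rewrite (eq_bigr (fun _ => d)); first by rewrite sum_nat_const.
by move=> x _; rewrite -(Hd x).
Qed.

Lemma ball_card G d x0 i : (forall x, deg G x = d) -> #|ball G x0 i| <= d.+1 ^ i.
Proof.
move=> Hd; elim: i => [|i IH] /=; first by rewrite cards1.
rewrite cardsU; apply: (leq_trans (leq_subr _ _)).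
apply: (leq_trans (leq_add (leqnn _) (nbr_card _ Hd))).
rewrite expnS mulSn; apply: leq_add => //.
by rewrite mulnC leq_mul2l IH orbT.
Qed.

Lemma ball_mono G x0 i j : i <= j -> ball G x0 i \subset ball G x0 j.
Proof.
elim: j => [|j IH]; first by rewrite leqn0 => /eqP ->.
rewrite leq_eqVlt => /orP [/eqP -> // | ]; rewrite ltnS => /IH Hs.
by apply: (subset_trans Hs) => /=; apply: subsetUl.
Qed.

Lemma ball_path G x0 p : path (adj G) x0 p -> last x0 p \in ball G x0 (size p).
Proof.
elim/last_ind: p => [|p z IH]; first by rewrite /= inE.
rewrite rcons_path last_rcons size_rcons => /andP [/IH Hp Hz] /=.
by rewrite inE; apply/orP; right; rewrite inE; apply/existsP; exists (last x0 p); rewrite Hp.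
Qed.

Lemma moore G d r x0 : (forall x, deg G x = d) -> (forall y, dist_le G x0 y r) ->
  #|T| <= d.+1 ^ r.
Proof.
move=> Hd Hr; apply: (leq_trans _ (ball_card x0 r Hd)).
apply: subset_leq_card; apply/subsetP => y _.
have [p [Pp Lp Sp]] := Hr y.
by apply: (subsetP (ball_mono G x0 Sp)); rewrite -Lp; apply: ball_path.
Qed.

End Basics.
Section Core.
Variables V W : finType.
Variable F : {set {set V}}.
Variable G : {set {set W}}.

Definition detour (r : nat) := forall a b, adj F a b -> dist_le (F :\ [set a; b]) a b r.

Lemma sat_dist r : 0 < r -> detour r -> saturated F G -> forall x y, dist_le G x y r.
Proof.
move=> r0 HF [_ NoCopy Sat] x y.
case: (eqVneq x y) => [-> | xy]; first by exists [::].
case Axy: (adj G x y); first by exists [:: y]; rewrite /= Axy.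
have [f [finj fhom]] := Sat x y xy (negbT Axy).
have: ~ (forall a b, adj F a b -> adj G (f a) (f b)) by move=> H; apply NoCopy; exists f.
move=> H0; have [a H1] := not_all_ex_not _ _ H0.
have [b H2] := not_all_ex_not _ _ H1.
have [Fab nGab] := imply_to_and _ _ H2.
have Hab := fhom a b Fab.
have E : [set f a; f b] = [set x; y].
  move: Hab; rewrite /adj in_setU in_set1 => /andP [fab /orP [H|/eqP //]].
  by exfalso; apply nGab; rewrite /adj fab H.
have Hpath : forall p a0, path (adj (F :\ [set a; b])) a0 p -> path (adj G) (f a0) (map f p).
  elim => [//|v p IH] a0 /= /andP [Huv Hp]; rewrite IH // andbT.
  move: Huv; rewrite /adj in_setD1 => /andP [uv /andP [ne inF]].
  have := fhom a0 v; rewrite /adj uv inF => /(_ isT) /andP [fuv].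
  rewrite in_setU in_set1 => /orP [-> | /eqP E2]; first by rewrite fuv.
  exfalso; move: E2; rewrite -E => /set2_eq [[/finj E1 /finj E3] | [/finj E1 /finj E3]]; subst.
    by move/eqP: ne.
  by move/eqP: ne; apply; apply: setUC.
have [p [Pp Lp Sp]] := HF a b Fab.
have Dab : dist_le G (f a) (f b) r.
  by exists (map f p); rewrite last_map Lp size_map; split => //; apply Hpath.
by case/set2_eq: E => [[<- <-] | [<- <-]] //; apply: dist_sym.
Qed.

Lemma core r : 0 < r -> detour r -> regular G -> saturated F G ->
  exists d, #|W| <= d.+1 ^ r /\ #|W| * d <= 2 * #|G|.
Proof.
move=> r0 HF Hreg Hsat.
case: (pickP (@predT W)) => [x0 _ | none]; last first.
  by exists 0; rewrite (eq_card0 none).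
exists (deg G x0); split.
  apply: (moore (x0 := x0)) => [x|y]; first exact: Hreg.
  exact: sat_dist.
apply: (leq_trans _ (handshake G)).
rewrite card_adj_pairs (eq_bigr (fun _ => deg G x0)); last by move=> x _; apply: Hreg.
by rewrite sum_nat_const.
Qed.

End Core.
From Stdlib Require Import Lra.
Section Real.
Local Open Scope R_scope.
Lemma INR_expn (m r : nat) : INR (m ^ r)%N = INR m ^ r.
Proof. elim: r => [//|r IH]; by rewrite expnS mult_INR IH. Qed.

Lemma Rpower_root (x : R) (r : nat) : 0 < x -> (0 < r)%N ->
  Rpower (x ^ r) (/ INR r) = x.
Proof.
move=> x0 r0.
rewrite -Rpower_pow // Rpower_mult Rinv_r ?Rpower_1 //.
apply: not_0_INR; by case: r r0.
Qed.

Lemma real_bound (n d k r : nat) : (0 < r)%N -> (2 ^ r <= n)%N -> (n <= d.+1 ^ r)%N -> (n * d <= 2 * k)%N ->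
  Rle (Rmult (/ INR 4) (Rpower (INR n) (Rplus 1 (Rinv (INR r))))) (INR k).
Proof.
move=> r0 Hn Hd Hk.
have -> : INR 4 = 4 by rewrite /=; ring.
have n0 : 0 < INR n by apply: lt_0_INR; apply/ltP; apply: leq_trans Hn; rewrite expn_gt0.
have r0' : 0 <= / INR r by apply: Rlt_le; apply: Rinv_0_lt_compat; apply: lt_0_INR; apply/ltP.
set s := Rpower (INR n) (/ INR r).
have H1 : s <= INR d.+1.
  rewrite /s -[X in _ <= X](@Rpower_root (INR d.+1) r) //; last by apply: lt_0_INR; apply/ltP.
  apply: Rle_Rpower_l => //; split => //; rewrite -INR_expn; apply: le_INR; exact/leP.
have H2 : 2 <= s.
  rewrite /s -{1}(@Rpower_root 2 r) //; last by lra.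
  apply: Rle_Rpower_l => //; split; first by apply: pow_lt; lra.
  have -> : 2 = INR 2 by [].
  rewrite -INR_expn; apply: le_INR; exact/leP.
have H3 : INR n * INR d <= 2 * INR k.
  have -> : 2 = INR 2 by [].
  rewrite -!mult_INR; apply: le_INR; exact/leP.
rewrite Rpower_plus Rpower_1 // -/s.
rewrite S_INR in H1.
have : INR n * (s / 2) <= INR n * INR d by apply: Rmult_le_compat_l; lra.
lra.
Qed.
End Real.
Section Real2.
Local Open Scope R_scope.
Lemma real_contra (n d k M : nat) (c : R) : (0 < n)%N -> (M < d)%N -> (n * d <= 2 * k)%N ->
  2 * (c + 1) < INR M -> ~ (INR k / INR n < c + 1).
Proof.
move=> n0 Md Hk HM Hlt.
have Hn0 : 0 < INR n by apply: lt_0_INR; apply/ltP.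
have HdM : INR M + 1 <= INR d by rewrite -S_INR; apply: le_INR; apply/leP.
have H2 : INR n * INR d <= 2 * INR k.
  have -> : 2 = INR 2 by [].
  rewrite -!mult_INR; apply: le_INR; exact/leP.
have H3 : INR k < (c + 1) * INR n.
  have := Rmult_lt_compat_r (INR n) _ _ Hn0 Hlt.
  have -> : INR k / INR n * INR n = INR k by field; lra.
  done.
have H4 : INR n * (2 * (c + 1)) < INR n * INR d by apply: Rmult_lt_compat_l => //; lra.
lra.
Qed.

Lemma real_upper (n k s : nat) (eps : R) : (0 < n)%N -> (k <= n * s)%N -> 0 < eps ->
  INR k / INR n < INR s.+1 + eps.
Proof.
move=> n0 Hk He.
have Hn0 : 0 < INR n by apply: lt_0_INR; apply/ltP.
have H1 : INR k <= INR n * INR s by rewrite -mult_INR; apply: le_INR; exact/leP.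
have H2 : INR k / INR n <= INR s.
  apply: (Rmult_le_reg_r (INR n)) => //.
  have -> : INR k / INR n * INR n = INR k by field; lra.
  lra.
rewrite S_INR; lra.
Qed.

Lemma archi (x : R) : exists M : nat, x < INR M.
Proof. have [M HM] := INR_archimed 1 x Rlt_0_1; exists M; lra. Qed.
End Real2.
Section Cyc.
Variable V : finType.
Variable F : {set {set V}}.

Lemma path_avoid (x y : V) s z : x \notin z :: s -> path (adj F) z s ->
  path (adj (F :\ [set x; y])) z s.
Proof.
elim: s z => [//|v s IH] z; rewrite in_cons negb_or => /andP [xz xs] /= /andP [Hzv Hp].
move: (xs); rewrite in_cons negb_or => /andP [xv xs'].
rewrite IH // andbT.
move: Hzv; rewrite /adj in_setD1 => /andP [-> ->]; rewrite andbT.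
apply/negP => /eqP E.
have : x \in [set z; v] by rewrite E !inE eqxx.
by rewrite !inE (negbTE xv) (negbTE xz).
Qed.

Lemma cycle_detour (c : seq V) x : uniq c -> cycle (adj F) c -> 3 <= size c -> x \in c ->
  dist_le (F :\ [set x; next c x]) (next c x) x (size c).-1.
Proof.
move=> Uc Cc Sc; case/rot_to => i p E.
rewrite -(next_rot i Uc) -(size_rot i c); rewrite -(rot_uniq i) in Uc; rewrite -(rot_cycle i) in Cc.
rewrite E in Uc Cc *.
case: p E Uc Cc => [|y q] E Uc Cc; first by move: Sc; rewrite -(size_rot i) E.
case: q E Uc Cc => [|w q] E Uc Cc; first by move: Sc; rewrite -(size_rot i) E.
have -> : next [:: x, y, w & q] x = y by rewrite /next /= eqxx.
move: Uc => /= /andP [xn /andP [yn Uq]].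
move: Cc; rewrite /cycle /= => /andP [_].
rewrite rcons_path => /andP [Pq Hl].
exists (rcons (w :: q) x); rewrite last_rcons size_rcons; split => //.
rewrite rcons_path; apply/andP; split.
  by apply: path_avoid => //=; rewrite Pq; case/andP: Hl.
case/andP: Hl => _ Hl; move: Hl => /=; rewrite /adj in_setD1 => /andP [-> ->]; rewrite andbT.
apply/negP => /eqP /set2_eq [[E1 E2] | [E1 _]].
  by move: xn; rewrite E2 !inE eqxx.
have : last w q \in w :: q by apply: mem_last.
by rewrite E1 (negbTE yn).
Qed.

Lemma cycle_hyp_detour m :
  (forall e, e \in F -> edge_in_short_cycle F e m.+1) -> detour F m.
Proof.
move=> H a b Fab.
have eF : [set a; b] \in F by case/andP: Fab.
have [c [Uc Cc Sc Lc [x xc Ex]]] := H _ eF.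
have D := cycle_detour Uc Cc Sc xc.
have Dm : dist_le (F :\ [set x; next c x]) (next c x) x m.
  case: D => p [P1 P2 P3]; exists p; split => //; apply: leq_trans P3 _.
  by rewrite -subn1 leq_subLR add1n.
rewrite Ex; case/set2_eq: (Ex) => [[E1 E2] | [E1 E2]]; rewrite E1 E2.
  exact: dist_sym.
exact: Dm.
Qed.
End Cyc.
Section Comp.
Variable T : finType.
Variable G : {set {set T}}.
Variables a b : T.
Let e := [set a; b].
Let e1 := adj G.
Let e2 := adj (G :\ e).

Lemma csym1 : connect_sym e1.
Proof. apply: sym_connect_sym => x y; exact: adjC. Qed.
Lemma csym2 : connect_sym e2.
Proof. apply: sym_connect_sym => x y; exact: adjC. Qed.

Lemma ncompE (H : {set {set T}}) : ncomp H = #|[set x | roots (adj H) x]|.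
Proof. by rewrite /ncomp /n_comp_mem; apply: eq_card => x; rewrite !inE andbT. Qed.

Lemma conn21 x y : connect e2 x y -> connect e1 x y.
Proof.
apply: connect_sub => u v; rewrite /e2 /adj in_setD1 => /andP [uv /andP [_ H]].
by apply: connect1; rewrite /e1 /adj uv H.
Qed.

Let R1 := [set x | roots e1 x].
Let R2 := [set x | roots e2 x].

Lemma roots_img : [set root e1 x | x in R2] = R1.
Proof.
apply/setP => z; apply/imsetP/idP.
  by move=> [x _ ->]; rewrite inE /roots root_root //; apply: csym1.
rewrite inE /roots => /eqP Hz; exists (root e2 z); first by rewrite inE /roots root_root //; apply: csym2.
rewrite -{1}Hz; apply/(rootP csym1); apply: conn21; exact: connect_root.
Qed.

Lemma ncomp_lt : adj G a b -> ~~ connect e2 a b -> ncomp G < ncomp (G :\ e).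
Proof.
move=> Hab Nc; rewrite !ncompE -/e -/e1 -/e2 -/R1 -/R2 -roots_img.
rewrite ltn_neqAle leq_imset_card andbT; apply/negP => /imset_injP Hinj.
have r2a : root e2 a \in R2 by rewrite inE /roots root_root //; apply: csym2.
have r2b : root e2 b \in R2 by rewrite inE /roots root_root //; apply: csym2.
have : root e2 a = root e2 b.
  apply: Hinj => //.
  have E1 : root e1 (root e2 a) = root e1 a by apply/esym/(rootP csym1); apply: conn21; exact: connect_root.
  have E2 : root e1 (root e2 b) = root e1 b by apply/esym/(rootP csym1); apply: conn21; exact: connect_root.
  by rewrite E1 E2; apply/(rootP csym1); apply: connect1.
by move/(rootP csym2); rewrite (negbTE Nc).
Qed.

Lemma conn12 : connect e2 a b -> forall x y, connect e1 x y -> connect e2 x y.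
Proof.
move=> Cab; apply: connect_sub => u v Huv.
case: (eqVneq [set u; v] e) => [E | ne].
  case/set2_eq: E => [[-> ->] | [-> ->]] //; by rewrite csym2.
by apply: connect1; move: Huv; rewrite /e2 /e1 /adj in_setD1 ne => /andP [-> ->].
Qed.

Lemma ncomp_ge : connect e2 a b -> ncomp (G :\ e) <= ncomp G.
Proof.
move=> Cab; rewrite !ncompE -/e -/e1 -/e2 -/R1 -/R2 -roots_img.
rewrite card_in_imset // => r1 r2; rewrite !inE /roots => /eqP H1 /eqP H2 /(rootP csym1) C.
by rewrite -H1 -H2; apply/(rootP csym2); apply: conn12.
Qed.
End Comp.
Lemma inj_into (V W : finType) (S : {set V}) (B : {set W}) (a : V) (b : W) :
  a \in S -> b \in B -> #|S| <= #|B| ->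
  exists g : V -> W, [/\ {in S &, injective g}, {in S, forall w, g w \in B} & g a = b].
Proof.
move=> aS bB Hc.
set S' := S :\ a; set B' := B :\ b.
have HS' : #|S'| <= #|B'|.
  by move: Hc; rewrite (cardsD1 a S) (cardsD1 b B) aS bB.
set es := enum S'; set eb := enum B'.
have Hsz : size es <= size eb by rewrite /es /eb -!cardE.
pose g w := if w == a then b else nth b eb (index w es).
have gB' : forall w, w \in S -> w != a -> g w \in B'.
  move=> w wS wa; rewrite /g (negbTE wa).
  have wes : w \in es by rewrite mem_enum !inE wa.
  rewrite -(mem_enum (mem B')) -/eb; apply: mem_nth.
  by apply: leq_trans Hsz; rewrite index_mem.
exists g; split => //; last by rewrite /g eqxx.
- move=> w1 w2 w1S w2S.
  case: (eqVneq w1 a) => [-> | w1a]; case: (eqVneq w2 a) => [-> | w2a] //.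
  + move=> E; have := gB' w2 w2S w2a; by rewrite -E /g eqxx !inE eqxx.
  + move=> E; have := gB' w1 w1S w1a; by rewrite E /g eqxx !inE eqxx.
  rewrite /g (negbTE w1a) (negbTE w2a) => /eqP.
  have i1 : index w1 es < size eb by apply: leq_trans Hsz; rewrite index_mem mem_enum !inE w1a.
  have i2 : index w2 es < size eb by apply: leq_trans Hsz; rewrite index_mem mem_enum !inE w2a.
  rewrite nth_uniq ?enum_uniq // => /eqP Ei.
  have m1 : w1 \in es by rewrite mem_enum !inE w1a.
  have m2 : w2 \in es by rewrite mem_enum !inE w2a.
  by rewrite -(nth_index w1 m1) Ei nth_index.
- move=> w wS; case: (eqVneq w a) => [-> | wa]; first by rewrite /g eqxx.
  by have := gB' w wS wa; rewrite inE => /andP [].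
Qed.
Section Blocks.
Variables s t : nat.
Hypothesis s0 : 0 < s.
Let n := t * s.

Definition blk (i : 'I_n) := i %/ s.
Definition Blk (x : 'I_n) : {set 'I_n} := [set j | blk j == blk x].

Lemma card_Blk x : #|Blk x| = s.
Proof.
have qlt : blk x < t by rewrite /blk ltn_divLR.
have lt_l : forall l : 'I_s, blk x * s + l < n.
  move=> l; apply: (@leq_trans (blk x * s + s)); first by rewrite ltn_add2l.
  by rewrite -mulSnr /n leq_mul2r qlt orbT.
pose h (l : 'I_s) : 'I_n := insubd x (blk x * s + l).
have hv : forall l, val (h l) = blk x * s + l by move=> l; rewrite val_insubd lt_l.
have -> : Blk x = h @: setT.
  apply/setP => j; rewrite inE; apply/idP/imsetP.
    move=> /eqP Hj; exists (Ordinal (ltn_pmod j s0)) => //.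
    by apply: val_inj; rewrite hv /= -/(blk j) -Hj /blk -divn_eq.
  move=> [l _ ->]; rewrite /blk hv divnMDl // divn_small ?addn0 //.
rewrite card_imset ?cardsT ?card_ord //.
by move=> l1 l2 /(congr1 val); rewrite !hv => /addnI /val_inj.
Qed.

Definition G0 : {set {set 'I_n}} :=
  [set [set p.1; p.2] | p in [set p : 'I_n * 'I_n | (p.1 != p.2) && (blk p.1 == blk p.2)]].

Lemma adjG0 i j : adj G0 i j = (i != j) && (blk i == blk j).
Proof.
rewrite /adj; apply/andP/andP => [[ij /imsetP [[u v]]] | [ij bij]].
  rewrite inE /= => /andP [uv buv] /set2_eq [[-> ->] | [-> ->]]; split => //.
  all: try by rewrite eq_sym.
split => //; apply/imsetP; exists (i, j) => //; by rewrite inE /= ij bij.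
Qed.

Lemma degG0 i : deg G0 i = s.-1.
Proof.
have -> : deg G0 i = #|Blk i :\ i|.
  apply: eq_card => j; rewrite !inE adjG0 eq_sym; by rewrite [blk i == _]eq_sym.
by move: (cardsD1 i (Blk i)); rewrite card_Blk inE eqxx add1n => ->.
Qed.

Lemma cardG0 : #|G0| <= n * s.-1.
Proof.
apply: (leq_trans (leq_imset_card _ _)).
have -> : [set p : 'I_n * 'I_n | (p.1 != p.2) && (blk p.1 == blk p.2)] =
          [set p : 'I_n * 'I_n | adj G0 p.1 p.2].
  by apply/setP => p; rewrite !inE adjG0.
rewrite card_adj_pairs (eq_bigr (fun _ => s.-1)); last by move=> x _; apply: degG0.
by rewrite sum_nat_const card_ord.
Qed.

Lemma sgraphG0 : is_sgraph G0.
Proof. by move=> e /imsetP [[u v]]; rewrite inE /= => /andP [uv _] ->; rewrite cards2 uv. Qed.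

Lemma regG0 : regular G0.
Proof. by move=> x y; rewrite !degG0. Qed.

End Blocks.
Section Sat.
Variable V : finType.
Variable F : {set {set V}}.
Variables s t : nat.
Hypothesis s0 : 0 < s.
Hypothesis Hs : #|V| = s.+1.
Hypothesis sg : is_sgraph F.
Hypothesis conn : connected F.
Variables a b : V.
Hypothesis Fab : adj F a b.
Hypothesis Ncab : ~~ connect (adj (F :\ [set a; b])) a b.
Let n := t * s.

Lemma adjU (H : {set {set 'I_n}}) X u v : adj H u v -> adj (H :|: X) u v.
Proof. by rewrite /adj in_setU => /andP [-> ->]. Qed.

Lemma path_blk (f : V -> 'I_n) : (forall x y, adj F x y -> adj (G0 s t) (f x) (f y)) ->
  forall p x, path (adj F) x p -> blk (f (last x p)) = blk (f x).
Proof.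
move=> fh; elim => [//|y p IH] x /= /andP [Hxy Hp].
rewrite IH //; move: (fh _ _ Hxy); rewrite adjG0 => /andP [_ /eqP] //.
Qed.

Lemma nocopyG0 : ~ has_copy F (G0 s t).
Proof.
move=> [f [finj fh]].
have Hsub : f @: setT \subset Blk (f a).
  apply/subsetP => z /imsetP [w _ ->]; rewrite inE.
  have /connectP [p Pp Lp] := conn a w.
  by rewrite Lp (path_blk fh Pp).
have := subset_leq_card Hsub; rewrite card_Blk // card_imset // cardsT Hs.
by rewrite ltnn.
Qed.

Let e := [set a; b].
Let A := [set w | connect (adj (F :\ e)) a w].

Lemma aA : a \in A. Proof. by rewrite inE connect0. Qed.
Lemma bA : b \notin A. Proof. by rewrite inE. Qed.

Lemma mixed u v : u \in A -> v \notin A -> adj F u v -> u = a /\ v = b.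
Proof.
move=> uA vA Fuv.
case: (eqVneq [set u; v] e) => [E | ne].
  case/set2_eq: E => [[-> ->] // | [E1 E2]]; by move: uA; rewrite E1 (negbTE bA).
exfalso; move/negP: vA; apply; move: uA; rewrite !inE => Hu.
apply: (connect_trans Hu); apply: connect1; move: Fuv.
by rewrite /adj in_setD1 ne => /andP [-> ->].
Qed.

Lemma satG0 : saturated F (G0 s t).
Proof.
split; [exact: sgraphG0 | exact: nocopyG0 |].
move=> x y xy; rewrite adjG0 xy /= => bxy.
have cA : #|A| <= #|Blk x|.
  rewrite card_Blk //; apply: (@leq_trans #|[set~ b]|); last by rewrite cardsC1 Hs.
  apply: subset_leq_card; apply/subsetP => w wA; rewrite !inE; apply/negP => /eqP E.
  by move: wA; rewrite E (negbTE bA).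
have cB : #|~: A| <= #|Blk y|.
  rewrite card_Blk //; apply: (@leq_trans #|[set~ a]|); last by rewrite cardsC1 Hs.
  apply: subset_leq_card; apply/subsetP => w wA; rewrite !inE; apply/negP => /eqP E.
  by move: wA; rewrite E inE aA.
have xB : x \in Blk x by rewrite inE.
have yB : y \in Blk y by rewrite inE.
have bA' : b \in ~: A by rewrite inE bA.
have [gA [gAi gAB gAa]] := inj_into aA xB cA.
have [gB [gBi gBB gBb]] := inj_into bA' yB cB.
have Exy : adj (G0 s t :|: [set [set x; y]]) x y by rewrite /adj xy in_setU in_set1 eqxx orbT.
pose f w := if w \in A then gA w else gB w.
have fa : f a = x by rewrite /f aA.
have fb : f b = y by rewrite /f (negbTE bA).
have nA : forall w, w \notin A -> w \in ~: A by move=> w; rewrite in_setC.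
exists f; split.
- move=> w1 w2; rewrite /f; case: (boolP (w1 \in A)) => h1; case: (boolP (w2 \in A)) => h2.
  + exact: gAi.
  + move=> E; have := gAB _ h1; have := gBB w2 (nA _ h2); rewrite -E !inE => /eqP H1 /eqP H2.
    by rewrite -H1 H2 eqxx in bxy.
  + move=> E; have := gBB _ (nA _ h1); have := gAB w2 h2; rewrite -E !inE => /eqP H1 /eqP H2.
    by rewrite -H1 H2 eqxx in bxy.
  + by apply: gBi; apply: nA.
- move=> w1 w2 Fw; have w12 := adj_neq Fw.
  case: (boolP (w1 \in A)) => h1; case: (boolP (w2 \in A)) => h2.
  + apply: adjU; rewrite adjG0 /f h1 h2; apply/andP; split.
      by apply/negP => /eqP /gAi E; rewrite E ?eqxx in w12.
    by move: (gAB _ h1) (gAB _ h2); rewrite !inE => /eqP -> /eqP ->.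
  + by have [-> ->] := mixed h1 h2 Fw; rewrite fa fb.
  + by have [-> ->] := mixed h2 h1 (etrans (adjC _ _ _) Fw); rewrite fa fb adjC.
  + apply: adjU; rewrite adjG0 /f (negbTE h1) (negbTE h2); apply/andP; split.
      by apply/negP => /eqP /gBi E; rewrite E ?eqxx ?nA in w12.
    by move: (gBB _ (nA _ h1)) (gBB _ (nA _ h2)); rewrite !inE => /eqP -> /eqP ->.
Qed.
End Sat.
Lemma ex_min (P : nat -> Prop) k0 : P k0 -> exists k, P k /\ forall j, P j -> k <= j.
Proof.
have H : forall m k, k <= m -> P k -> exists k, P k /\ forall j, P j -> k <= j.
  elim => [|m IH] k hk Pk.
    by exists k; split => // j _; move: hk; rewrite leqn0 => /eqP ->.
  case: (classic (exists j, j < k /\ P j)) => [[j [jk Pj]] | Hn].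
    by apply: (IH j) => //; rewrite -ltnS; apply: leq_trans jk hk.
  exists k; split => // j Pj; case: (leqP k j) => // jk.
  by exfalso; apply: Hn; exists j.
by move=> Pk0; apply: (H k0 k0).
Qed.

Section Main.
Variable V : finType.
Variable F : {set {set V}}.

Lemma nocut_detour : (~ exists e, cut_edge F e) -> detour F #|V|.+1.
Proof.
move=> Hn a b Fab.
have eF : [set a; b] \in F by case/andP: Fab.
have C : connect (adj (F :\ [set a; b])) a b.
  case: (boolP (connect (adj (F :\ [set a; b])) a b)) => // Nc.
  by exfalso; apply: Hn; exists [set a; b]; split => //; apply: ncomp_lt.
case/connectP: C => p Pp Eb; move: Eb.
case/shortenP: Pp => p' Pp' Up' _ Eb.
exists p'; split => //.
have := max_card (mem (a :: p')); rewrite (card_uniqP Up') /= => H.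
by apply: (@leq_trans #|V|); [exact: ltnW | exact: leqnSn].
Qed.

Lemma part1 m : 1 <= m ->
     (forall e, e \in F -> edge_in_short_cycle F e m.+1) ->
     rsat_Omega F (fun n => Rpower (INR n) (Rplus 1 (Rinv (INR m)))).
Proof.
move=> m0 H; exists (Rinv (INR 4)); split; first by apply: Rinv_0_lt_compat; apply: lt_0_INR; apply/ltP.
exists (2 ^ m) => n k Hn [[G [Hreg Hsat Hk]] _].
have [d [H1 H2]] := core m0 (cycle_hyp_detour H) Hreg Hsat.
rewrite card_ord in H1 H2; rewrite Hk in H2.
exact: real_bound m0 Hn H1 H2.
Qed.

Lemma part2 r : 1 <= r ->
     (forall e, e \in F -> diam_le (F :\ e) r) ->
     rsat_Omega F (fun n => Rpower (INR n) (Rplus 1 (Rinv (INR r)))).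
Proof.
move=> r0 H; exists (Rinv (INR 4)); split; first by apply: Rinv_0_lt_compat; apply: lt_0_INR; apply/ltP.
have HD : detour F r by move=> a b Fab; apply: H; case/andP: Fab.
exists (2 ^ r) => n k Hn [[G [Hreg Hsat Hk]] _].
have [d [H1 H2]] := core r0 HD Hreg Hsat.
rewrite card_ord in H1 H2; rewrite Hk in H2.
exact: real_bound r0 Hn H1 H2.
Qed.

End Main.
Section Main3.
Variable V : finType.
Variable F : {set {set V}}.

Lemma part3 : is_sgraph F -> connected F ->
  ((exists c : R, rsat_liminf_le F c) <-> (exists e, cut_edge F e)).
Proof.
move=> sg conn; split.
  move=> [c Hc]; apply: NNPP => Hn.
  have HD := nocut_detour Hn.
  have [M HM] := archi (Rmult 2 (Rplus c 1)).
  have [n [k [Nn Hr Hlt]]] := Hc R1 Rlt_0_1 ((M.+1) ^ #|V|.+1).+1.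
  case: Hr => [[G [Hreg Hsat Hk]] _].
  have [d [H1 H2]] := core (ltn0Sn _) HD Hreg Hsat.
  rewrite card_ord in H1 H2; rewrite Hk in H2.
  have Md : M < d.
    rewrite ltnNge; apply/negP => dM.
    have : d.+1 ^ #|V|.+1 <= M.+1 ^ #|V|.+1 by rewrite leq_exp2r.
    by move=> H3; move: (leq_trans Nn (leq_trans H1 H3)); rewrite ltnn.
  have n0 : 0 < n by apply: leq_trans Nn.
  exact: (real_contra n0 Md H2 HM Hlt).
move=> [e [eF Hlt]].
have /cards2P [a [b [ab Ee]]] : #|e| == 2 by rewrite sg.
subst e.
have Fab : adj F a b by rewrite /adj ab eF.
have Ncab : ~~ connect (adj (F :\ [set a; b])) a b.
  by apply/negP => /ncomp_ge H; move: (leq_trans Hlt H); rewrite ltnn.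
have V2 : 2 <= #|V| by have := max_card (mem [set a; b]); rewrite cards2 ab.
set s := #|V|.-1.
have Hs : #|V| = s.+1 by rewrite /s prednK //; apply: leq_trans V2.
have s0 : 0 < s by rewrite -ltnS -Hs.
exists (INR #|V|) => eps heps N.
set t := N.+1.
pose P := fun k => exists G : {set {set 'I_(t * s)}}, [/\ regular G, saturated F G & #|G| = k].
have P0 : P #|G0 s t|.
  by exists (G0 s t); split => //; [exact: regG0 | exact: (satG0 t s0 Hs conn Ncab)].
have [k [[G [Hreg Hsat Hk]] Hmin]] := ex_min P0.
exists (t * s), k; split.
- by apply: (leq_trans (leqnSn N)); rewrite /t leq_pmulr.
- split; first by exists G.
  by move=> G' Hr' Hs'; apply: Hmin; exists G'.
- rewrite Hs; apply: real_upper => //.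
    by rewrite muln_gt0 s0.
  apply: (@leq_trans #|G0 s t|).
    exact: Hmin P0.
  apply: (leq_trans (cardG0 t s0)); rewrite leq_mul2l; apply/orP; right; exact: leq_pred.
Qed.
End Main3.

Theorem proposition1p2 (V : finType) (F : {set {set V}}) :
  is_sgraph F ->
  (forall m : nat, 1 <= m ->
     (forall e, e \in F -> edge_in_short_cycle F e m.+1) ->
     rsat_Omega F (fun n => Rpower (INR n) (Rplus 1 (Rinv (INR m))))) /\
  (forall r : nat, 1 <= r ->
     (forall e, e \in F -> diam_le (F :\ e) r) ->
     rsat_Omega F (fun n => Rpower (INR n) (Rplus 1 (Rinv (INR r))))) /\
  (connected F ->
     ((exists c : R, rsat_liminf_le F c) <-> (exists e, cut_edge F e))).
Proof.
move=> sg; split; first exact: part1.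
split; first exact: part2.
by move=> conn; apply: part3.
Qed.
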